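(* Let $\alpha\in(\pi/8,3\pi/8)$ with $\alpha/\pi\notin\mathbb{Q}$, $\beta=\alpha-\pi/2$, $\rho=0.01$, $A_1=\rho R(\alpha)$, $A_2=\rho R(\beta)$ where $R(\theta)=\begin{bmatrix}\cos\theta&-\sin\theta\\ \sin\theta&\cos\theta\end{bmatrix}$, and $c(x)=x_1^2+2x_2^2$ for $x=[x_1,x_2]^\top\in\mathbb{R}^2$. Then the optimal value function $J^\star$ of $\{A_1,A_2\}$ with cost $c$ is non-differentiable on a dense subset of $\mathbb{R}^2$.
   Context: For the switched linear system $\xi(t+1)=A_{\sigma(t)}\xi(t)$ with switching signal $\sigma:\mathbb{N}\to\{1,2\}$, $\xi(t,x,\sigma)$ denotes the solution with $\xi(0)=x$, and $J^\star(x)=\inf_\sigma\sum_{t=0}^\infty c(\xi(t,x,\sigma))$. *)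

(* Defs.v *)
From HB Require Import structures.
From mathcomp Require Import all_boot all_order all_algebra.
From mathcomp Require Import all_classical all_reals all_analysis.
Set Implicit Arguments. Unset Strict Implicit. Unset Printing Implicit Defensive.
Import Order.TTheory GRing.Theory Num.Theory.
Import numFieldNormedType.Exports.
Local Open Scope classical_set_scope.
Local Open Scope ring_scope.

Definition rotmx {R : realType} (th : R) : 'M[R]_2 :=
  \matrix_(i < 2, j < 2)
    (if i == j then cos th
     else if (nat_of_ord i == 0)%N then - sin th else sin th).

Fixpoint traj {R : realType} {I : Type} (A : I -> 'M[R]_2)
  (sigma : nat -> I) (x : 'cV[R]_2) (t : nat) : 'cV[R]_2 :=
  match t with
  | 0 => x
  | t'.+1 => A (sigma t') *m traj A sigma x t'
  end.

Definition total_cost {R : realType} {I : Type} (A : I -> 'M[R]_2)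
  (c : 'cV[R]_2 -> R) (x : 'cV[R]_2) (sigma : nat -> I) : \bar R :=
  (\sum_(0 <= t <oo) (c (traj A sigma x t))%:E)%E.

(* Optimal value function J*(x) = inf_sigma sum_t c(xi(t,x,sigma)),
   taken as an extended real infimum and coerced to R (it is finite
   in the situation of the theorem). *)
Definition Jstar {R : realType} {I : Type} (A : I -> 'M[R]_2)
  (c : 'cV[R]_2 -> R) (x : 'cV[R]_2) : R :=
  fine (ereal_inf [set total_cost A c x sigma | sigma in [set: nat -> I]]).

(* Main.v *)
Require Import Defs.
From HB Require Import structures.
From mathcomp Require Import all_boot all_order all_algebra.
From mathcomp Require Import all_classical all_reals all_analysis.
From mathcomp Require Import ring lra.
Import Order.TTheory GRing.Theory Num.Theory.
Import numFieldNormedType.Exports.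
Local Open Scope classical_set_scope.
Local Open Scope ring_scope.

Section K.
Variable R : realType.

Definition fr (a : R) (i : nat) := i%:R * a - (Num.floor (i%:R * a))%:~R.

Lemma fr01 a i : 0 <= fr a i < 1.
Proof.
rewrite /fr; have h1 := floor_le (i%:R * a); have h2 := floorD1_gt (i%:R * a).
rewrite intrD in h2; apply/andP; split; lra.
Qed.

Lemma pigeon (a : R) (d : R) : 0 < d ->
  exists i j : nat, (i < j)%N /\ `|fr a j - fr a i| < d.
Proof.
move=> d0.
pose N := (Num.truncn d^-1).+1.
have Nd : N%:R^-1 < d.
  have h := truncnS_gt (d^-1).
  rewrite -[d]invrK ltf_pV2 ?posrE ?invr_gt0 ?ltr0n //.
have N0 : 0 < N%:R :> R by rewrite ltr0n.
pose bin (i : 'I_N.+1) : 'I_N := inord (absz (Num.floor (fr a i * N%:R))).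
have fl (i : nat) : 0 <= Num.floor (fr a i * N%:R) /\ (absz (Num.floor (fr a i * N%:R)) < N)%N.
  have [f0 f1] := andP (fr01 a i).
  have g0 : 0 <= Num.floor (fr a i * N%:R) by rewrite floor_ge0 mulr_ge0 // ltW.
  split => //.
  rewrite -ltz_nat gez0_abs // floor_lt_int.
  by rewrite -[X in _ < X]mul1r ltr_pM2r.
have : ~~ injectiveb bin.
  apply/negP => /injectiveP /leq_card; by rewrite !card_ord ltnn.
case/injectivePn => i [j] ij eqb.
have eqf : Num.floor (fr a i * N%:R) = Num.floor (fr a j * N%:R).
  have [g0 l0] := fl i; have [g1 l1] := fl j.
  have vi : nat_of_ord (bin i) = absz (Num.floor (fr a i * N%:R)) by rewrite /bin inordK.
  have vj : nat_of_ord (bin j) = absz (Num.floor (fr a j * N%:R)) by rewrite /bin inordK.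
  have e := congr1 (@nat_of_ord _) eqb; rewrite vi vj in e.
  by rewrite -(gez0_abs g0) -(gez0_abs g1) e.
have close : forall u v : R, Num.floor u = Num.floor v -> `|u - v| < 1.
  move=> u v e; have h1 := floor_le u; have h2 := floorD1_gt u.
  have h3 := floor_le v; have h4 := floorD1_gt v.
  rewrite e intrD in h1 h2; rewrite intrD in h4.
  rewrite ltr_norml; apply/andP; split; lra.
have cl := close _ _ eqf.
have dist : `|fr a i - fr a j| < d.
  apply: lt_trans Nd.
  rewrite -mulrBl normrM (ger0_norm (ltW N0)) in cl.
  by rewrite -(ltr_pM2r N0) mulVf ?gt_eqF.
case: (ltngtP i j) => hij.
- by exists i, j; split => //; rewrite distrC.
- by exists j, i; split.
- by move: ij; rewrite (val_inj hij) eqxx.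
Qed.


Lemma kron (a : R) : (forall (n : nat) (m : int), (0 < n)%N -> a * n%:R != m%:~R) ->
  forall g d : R, 0 < d -> exists t : nat, (0 < t)%N /\ exists m : int, `|t%:R * a - m%:~R - g| < d.
Proof.
move=> irr g d d0.
have [n [M [n0 [dd0 ddd]]]] : exists n : nat, exists M : int,
    (0 < n)%N /\ n%:R * a - M%:~R != 0 /\ `|n%:R * a - M%:~R| < Num.min d 1.
  have dm : 0 < Num.min d 1 by rewrite lt_min d0 ltr01.
  have [i [j [ij hd]]] := @pigeon a (Num.min d 1) dm.
  exists (j - i)%N, (Num.floor (j%:R * a) - Num.floor (i%:R * a)).
  have E : (j - i)%N%:R * a - (Num.floor (j%:R * a) - Num.floor (i%:R * a))%:~R = fr a j - fr a i.
    by rewrite /fr natrB ?(ltnW ij) // intrB; ring.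
  rewrite E; split; first by rewrite subn_gt0.
  split => //.
  rewrite -E subr_eq0 mulrC; apply: irr; by rewrite subn_gt0.
set dd := n%:R * a - M%:~R in dd0 ddd *.
pose p : int := if 0 < dd then - Num.floor g + 1 else - Num.floor g - 2.
pose gg := g + p%:~R.
have fg1 := floor_le g; have fg2 := floorD1_gt g; rewrite intrD in fg2.
have hdd : `|dd| < 1 by move: ddd; rewrite lt_min => /andP[].
have ddd' : `|dd| < d by move: ddd; rewrite lt_min => /andP[].
have hn := ltr_norml dd 1; rewrite hdd in hn.
have [hl hr] := andP (esym hn).
have hgg : 1 <= gg / dd.
  rewrite /gg /p; case: ifP => hd.
    by rewrite ler_pdivlMr // mul1r intrD intrN; lra.
  have hn0 : dd < 0 by rewrite lt_neqAle dd0 /= leNgt hd.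
  by rewrite ler_ndivlMr // mul1r intrB intrN; lra.
pose k := Num.floor (gg / dd).
have k1 : 1 <= k by rewrite floor_ge_int.
exists (absz k * n)%N; split.
  by rewrite muln_gt0 n0 andbT absz_gt0; apply: contraTneq k1 => ->.
exists (k * M + p).
have k0 : 0 <= k by apply: le_trans k1.
have -> : (`|k|%N * n)%:R * a - (k * M + p)%:~R - g = (k%:~R - gg / dd) * dd.
  rewrite natrM natr_absz (ger0_norm k0) intrD intrM mulrBl divfK // /gg /dd; ring.
rewrite normrM; apply: le_lt_trans ddd'.
rewrite -[X in _ <= X]mul1r ler_wpM2r ?normr_ge0 //.
have f1 := floor_le (gg / dd); have f2 := floorD1_gt (gg / dd).
rewrite intrD in f2; rewrite -/k in f1 f2.
rewrite ler_norml; apply/andP; split; lra.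
Qed.

End K.

Section Main.
Variables (R : realType) (alpha : R).

Definition rho : R := 100%:R^-1.
Definition Aop (i : 'I_2) : 'M[R]_2 :=
  if (nat_of_ord i == 0)%N then rho *: rotmx alpha else rho *: rotmx (alpha - pi / 2).
Definition cst (x : 'cV[R]_2) : R := x 0 0 ^+ 2 + 2 * x 1 0 ^+ 2.

Lemma mulmx2 (M : 'M[R]_2) (v : 'cV[R]_2) i :
  (M *m v) i 0 = M i 0 * v 0 0 + M i 1 * v 1 0.
Proof.
rewrite mxE !big_ord_recl big_ord0 addr0.
have -> : lift ord0 ord0 = 1 :> 'I_2 by apply/val_inj.
have -> : ord0 = 0 :> 'I_2 by apply/val_inj.
by [].
Qed.

Definition c0 (v : 'cV[R]_2) := v 0 0.
Definition c1 (v : 'cV[R]_2) := v 1 0.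

Lemma Aop_0 i (u : 'cV[R]_2) : c0 (Aop i *m u) =
  if (nat_of_ord i == 0)%N then rho * (cos alpha * c0 u - sin alpha * c1 u)
  else rho * (sin alpha * c0 u + cos alpha * c1 u).
Proof.
rewrite /c0 /c1 mulmx2 /Aop; case: ifP => _; rewrite !mxE /= ?cosBpihalf ?sinBpihalf.
  set a := u 0 0; set b := u 1 0; ring.
set a := u 0 0; set b := u 1 0; ring.
Qed.

Lemma Aop_1 i (u : 'cV[R]_2) : c1 (Aop i *m u) =
  if (nat_of_ord i == 0)%N then rho * (sin alpha * c0 u + cos alpha * c1 u)
  else rho * (- cos alpha * c0 u + sin alpha * c1 u).
Proof.
rewrite /c0 /c1 mulmx2 /Aop; case: ifP => _; rewrite !mxE /= ?cosBpihalf ?sinBpihalf.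
  set a := u 0 0; set b := u 1 0; ring.
set a := u 0 0; set b := u 1 0; ring.
Qed.

Definition Y t x := traj Aop (fun _ => ord0) x t.
Definition Yc0 t (v : 'cV[R]_2) := rho ^+ t * (cos (t%:R * alpha) * c0 v - sin (t%:R * alpha) * c1 v).
Definition Yc1 t (v : 'cV[R]_2) := rho ^+ t * (sin (t%:R * alpha) * c0 v + cos (t%:R * alpha) * c1 v).

Lemma YE t x : c0 (Y t x) = Yc0 t x /\ c1 (Y t x) = Yc1 t x.
Proof.
rewrite /Yc0 /Yc1 /Y; elim: t => [|t [IH0 IH1]] /=.
  rewrite !mul0r cos0 sin0 !expr0; move: (c0 x) (c1 x) => a b; split; ring.
rewrite (Aop_0 ord0 (traj Aop (fun=> ord0) x t)).
rewrite Aop_1 /= IH0 IH1.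
have -> : t.+1%:R * alpha = alpha + t%:R * alpha by rewrite mulrSr; ring.
rewrite cosD sinD exprS; move: (rho ^+ t) => r; split; ring.
Qed.


Fixpoint par (sg : nat -> 'I_2) t : bool :=
  if t is t'.+1 then par sg t' (+) (nat_of_ord (sg t') != 0)%N else false.

Definition rel (b : bool) (e : R) (u v : 'cV[R]_2) :=
  if b then c0 u = e * c1 v /\ c1 u = - (e * c0 v)
  else c0 u = e * c0 v /\ c1 u = e * c1 v.

Lemma traj_rel sg x t : exists e, e ^+ 2 = 1 /\ rel (par sg t) e (traj Aop sg x t) (Y t x).
Proof.
elim: t => [|t [e [he hr]]].
  by exists 1; rewrite expr1n /rel /= /Y /= !mul1r.
rewrite /Y /=.
move: hr; rewrite /rel /Y.
set u := traj Aop sg x t; set v := traj Aop (fun=> ord0) x t.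
rewrite (Aop_0 (sg t) u) (Aop_1 (sg t) u) (Aop_0 ord0 v) (Aop_1 ord0 v) /=.
case Hs : (nat_of_ord (sg t) == 0)%N => /=;
  case: (par sg t) => /= -[-> ->].
- exists e; split => //; split; ring.
- exists e; split => //; split; ring.
- exists (- e); rewrite sqrrN; split => //; split; ring.
- exists e; split => //; split; ring.
Qed.

Definition cb (b : bool) (v : 'cV[R]_2) :=
  if b then c1 v ^+ 2 + 2 * c0 v ^+ 2 else c0 v ^+ 2 + 2 * c1 v ^+ 2.

Lemma cst_traj sg x t : cst (traj Aop sg x t) = cb (par sg t) (Y t x).
Proof.
have [e [he]] := traj_rel sg x t.
rewrite /cst /cb /rel -/(c0 _) -/(c1 _).
have E a : (e * a) ^+ 2 = a ^+ 2 by rewrite exprMn he mul1r.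
by case: (par sg t) => -[-> ->]; rewrite ?sqrrN !E.
Qed.


Definition mn (a b : R) := Num.min (a ^+ 2 + 2 * b ^+ 2) (b ^+ 2 + 2 * a ^+ 2).
Definition L t x := if t == 0%N then c0 x ^+ 2 + 2 * c1 x ^+ 2 else mn (Yc0 t x) (Yc1 t x).

Lemma L_ge0 t x : 0 <= L t x.
Proof.
have H (a b : R) : 0 <= a ^+ 2 + 2 * b ^+ 2.
  by apply: addr_ge0; [exact: sqr_ge0 | apply: mulr_ge0 => //; exact: sqr_ge0].
by rewrite /L /mn; case: ifP => _; rewrite ?le_min ?H.
Qed.

Lemma LE t x : (t != 0)%N -> L t x = Num.min (cb false (Y t x)) (cb true (Y t x)).
Proof.
move=> /negbTE t0; rewrite /L t0 /cb; have [-> ->] := YE t x; by [].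
Qed.

Lemma cost_lb sg x t : L t x <= cst (traj Aop sg x t).
Proof.
rewrite cst_traj; case: (eqVneq t 0%N) => [->|t0].
  by rewrite /L /= /cb /Y /=.
by rewrite LE // ge_min; case: (par sg t); rewrite lexx ?orbT.
Qed.

Definition dd x t := cb true (Y t x) < cb false (Y t x).
Definition target x t := (t != 0)%N && dd x t.
Definition sgs x t : 'I_2 := if target x t (+) dd x t.+1 then ord_max else ord0.

Lemma par_sgs x t : par (sgs x) t = target x t.
Proof.
elim: t => [//|t IH] /=; rewrite IH /sgs /target /=.
by case: (_ && _); case: (dd x t.+1).
Qed.

Lemma cost_opt x t : cst (traj Aop (sgs x) x t) = L t x.
Proof.
rewrite cst_traj par_sgs; case: (eqVneq t 0%N) => [->|t0].
  by rewrite /L /= /cb /Y /=.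
by rewrite LE // /target t0 /= /dd; case: ltP.
Qed.

Lemma Jinf x : ereal_inf [set total_cost Aop cst x sg | sg in [set: nat -> 'I_2]] =
  (\sum_(0 <= t <oo) (L t x)%:E)%E.
Proof.
apply/eqP; rewrite eq_le; apply/andP; split.
  apply: ge_ereal_inf; exists (total_cost Aop cst x (sgs x)); first by exists (sgs x).
  rewrite /total_cost le_eqVlt; apply/orP; left; apply/eqP.
  by apply: eq_eseriesr => t _; rewrite cost_opt.
apply: le_ereal_inf_tmp => _ [sg _ <-].
by apply: lee_nneseries => [t _ _|t _]; rewrite lee_fin ?L_ge0 ?cost_lb.
Qed.


Definition n2 (v : 'cV[R]_2) := c0 v ^+ 2 + c1 v ^+ 2.

Lemma Yn2 t x : Yc0 t x ^+ 2 + Yc1 t x ^+ 2 = (rho ^+ 2) ^+ t * n2 x.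
Proof.
rewrite /Yc0 /Yc1 /n2 exprAC.
have cs := cos2Dsin2 (t%:R * alpha).
move: (cos _) (sin _) (rho ^+ t) (c0 x) (c1 x) cs => C S r a b cs.
transitivity (r ^+ 2 * (C ^+ 2 + S ^+ 2) * (a ^+ 2 + b ^+ 2)); first ring.
by rewrite cs mulr1.
Qed.

Lemma L_le t x : L t x <= 2 * ((rho ^+ 2) ^+ t * n2 x).
Proof.
rewrite /L; case: ifP => [/eqP ->|_].
  rewrite expr0 mul1r /n2; have := sqr_ge0 (c0 x); lra.
rewrite -Yn2 /mn ge_min; apply/orP; left.
have := sqr_ge0 (Yc0 t x); lra.
Qed.

Lemma geo (q : R) n : 0 <= q <= 2^-1 -> \sum_(0 <= t < n) q ^+ t <= 2 - 2 * q ^+ n.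
Proof.
move=> /andP[q0 q2]; elim: n => [|n IH]; first by rewrite big_geq // expr0; lra.
rewrite big_nat_recr //= exprS.
have : 0 <= q ^+ n by apply: exprn_ge0.
move: (q ^+ n) IH => Q IH Q0; nra.
Qed.

Lemma rho2 : 0 <= rho ^+ 2 <= 2^-1.
Proof.
rewrite /rho sqr_ge0 /=.
have h : 0 < 100%:R :> R by rewrite ltr0n.
have : 100%:R^-1 <= 1 :> R by rewrite invf_le1 // ler1n.
have : 0 <= 100%:R^-1 :> R by rewrite invr_ge0 ltW.
have : 100%:R^-1 <= 2^-1 :> R by rewrite lef_pV2 ?posrE ?ler_nat // ltr0n.
move: (100%:R^-1 : R) => r; nra.
Qed.

Definition S x n := \sum_(0 <= t < n) L t x.

Lemma S_cvg x : cvgn (S x).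
Proof.
apply: nondecreasing_is_cvgn.
  by apply: nondecreasing_series => n _ _; exact: L_ge0.
exists (4 * n2 x) => _ [n _ <-].
rewrite /S; apply: (le_trans (ler_sum _ (fun t _ => L_le t x))).
rewrite -big_distrr /= -big_distrl /=.
have := geo (rho ^+ 2) n rho2; have : 0 <= n2 x by rewrite /n2 addr_ge0 ?sqr_ge0.
have : 0 <= (rho ^+ 2) ^+ n by rewrite exprn_ge0 // sqr_ge0.
move: (\sum_(_ <= _ < _ ) _) (n2 x) ((rho ^+ 2) ^+ n) => a b c; nra.
Qed.

Lemma Jstar_lim x : S x @ \oo --> Jstar Aop cst x.
Proof.
rewrite /Jstar Jinf.
have -> : (\sum_(0 <= t <oo) (L t x)%:E)%E = limn (EFin \o S x).
  by apply: congr_lim; apply/funext => n; rewrite /= /S sumEFin.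
rewrite EFin_lim ?S_cvg //=; exact: S_cvg.
Qed.


Lemma c0_lin h (w v : 'cV[R]_2) : c0 (h *: w + v) = h * c0 w + c0 v.
Proof. by rewrite /c0 !mxE. Qed.
Lemma c1_lin h (w v : 'cV[R]_2) : c1 (h *: w + v) = h * c1 w + c1 v.
Proof. by rewrite /c1 !mxE. Qed.
Lemma c0N (w : 'cV[R]_2) : c0 (- w) = - c0 w.
Proof. by rewrite /c0 !mxE. Qed.
Lemma c1N (w : 'cV[R]_2) : c1 (- w) = - c1 w.
Proof. by rewrite /c1 !mxE. Qed.

Lemma Yc0_lin t h w v : Yc0 t (h *: w + v) = h * Yc0 t w + Yc0 t v.
Proof.
rewrite /Yc0 c0_lin c1_lin; move: (rho ^+ t) (cos _) (sin _) => r C S.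
move: (c0 w) (c1 w) (c0 v) (c1 v) => a b c d; ring.
Qed.
Lemma Yc1_lin t h w v : Yc1 t (h *: w + v) = h * Yc1 t w + Yc1 t v.
Proof.
rewrite /Yc1 c0_lin c1_lin; move: (rho ^+ t) (cos _) (sin _) => r C S.
move: (c0 w) (c1 w) (c0 v) (c1 v) => a b c d; ring.
Qed.
Lemma Yc0N t w : Yc0 t (- w) = - Yc0 t w.
Proof.
rewrite /Yc0 c0N c1N; move: (rho ^+ t) (cos _) (sin _) => r C S.
move: (c0 w) (c1 w) => a b; ring.
Qed.
Lemma Yc1N t w : Yc1 t (- w) = - Yc1 t w.
Proof.
rewrite /Yc1 c0N c1N; move: (rho ^+ t) (cos _) (sin _) => r C S.
move: (c0 w) (c1 w) => a b; ring.
Qed.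

Lemma mn_le1 a b : mn a b <= a ^+ 2 + 2 * b ^+ 2.
Proof. by rewrite /mn ge_min lexx. Qed.
Lemma mn_le2 a b : mn a b <= b ^+ 2 + 2 * a ^+ 2.
Proof. by rewrite /mn ge_min lexx orbT. Qed.
Lemma mn_eq a b : mn a b = a ^+ 2 + 2 * b ^+ 2 \/ mn a b = b ^+ 2 + 2 * a ^+ 2.
Proof. by rewrite /mn; case: leP; [left|right]. Qed.

Lemma mn_br a b c d h :
  mn (h * c + a) (h * d + b) + mn (h * - c + a) (h * - d + b) - 2 * mn a b
  <= 4 * h ^+ 2 * (c ^+ 2 + d ^+ 2).
Proof.
have hc : 0 <= (h * c) ^+ 2 := sqr_ge0 _.
have hd : 0 <= (h * d) ^+ 2 := sqr_ge0 _.
have [->|->] := mn_eq a b.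
  have H1 := mn_le1 (h * c + a) (h * d + b).
  have H2 := mn_le1 (h * - c + a) (h * - d + b).
  have E : (h * c + a) ^+ 2 + 2 * (h * d + b) ^+ 2 + ((h * - c + a) ^+ 2 + 2 * (h * - d + b) ^+ 2)
     - 2 * (a ^+ 2 + 2 * b ^+ 2) = 2 * (h * c) ^+ 2 + 4 * (h * d) ^+ 2 by ring.
  have E2 : 4 * h ^+ 2 * (c ^+ 2 + d ^+ 2) = 4 * (h * c) ^+ 2 + 4 * (h * d) ^+ 2 by ring.
  rewrite E2; lra.
have H1 := mn_le2 (h * c + a) (h * d + b).
have H2 := mn_le2 (h * - c + a) (h * - d + b).
have E : (h * d + b) ^+ 2 + 2 * (h * c + a) ^+ 2 + ((h * - d + b) ^+ 2 + 2 * (h * - c + a) ^+ 2)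
   - 2 * (b ^+ 2 + 2 * a ^+ 2) = 4 * (h * c) ^+ 2 + 2 * (h * d) ^+ 2 by ring.
have E2 : 4 * h ^+ 2 * (c ^+ 2 + d ^+ 2) = 4 * (h * c) ^+ 2 + 4 * (h * d) ^+ 2 by ring.
rewrite E2; lra.
Qed.

Lemma q_br (a b c d h : R) :
  (h * c + a) ^+ 2 + 2 * (h * d + b) ^+ 2 + ((h * - c + a) ^+ 2 + 2 * (h * - d + b) ^+ 2)
   - 2 * (a ^+ 2 + 2 * b ^+ 2) <= 4 * h ^+ 2 * (c ^+ 2 + d ^+ 2).
Proof.
have hc : 0 <= (h * c) ^+ 2 := sqr_ge0 _.
have hd : 0 <= (h * d) ^+ 2 := sqr_ge0 _.
have E : (h * c + a) ^+ 2 + 2 * (h * d + b) ^+ 2 + ((h * - c + a) ^+ 2 + 2 * (h * - d + b) ^+ 2)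
     - 2 * (a ^+ 2 + 2 * b ^+ 2) = 2 * (h * c) ^+ 2 + 4 * (h * d) ^+ 2 by ring.
have E2 : 4 * h ^+ 2 * (c ^+ 2 + d ^+ 2) = 4 * (h * c) ^+ 2 + 4 * (h * d) ^+ 2 by ring.
rewrite E E2; lra.
Qed.

Lemma mn_kink s h :
  mn (h * - s + s) (h * s + s) + mn (h * - - s + s) (h * - s + s) - 2 * mn s s
  <= 4 * h ^+ 2 * (s ^+ 2 + s ^+ 2) - 4 * `|h| * s ^+ 2.
Proof.
have E0 : mn s s = 3 * s ^+ 2 by rewrite /mn minxx; ring.
rewrite E0.
have hs : 0 <= (h * s) ^+ 2 := sqr_ge0 _.
have E2 : 4 * h ^+ 2 * (s ^+ 2 + s ^+ 2) = 8 * (h * s) ^+ 2 by ring.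
rewrite E2.
case: (lerP 0 h) => h0.
  rewrite (ger0_norm h0).
  have H1 := mn_le2 (h * - s + s) (h * s + s).
  have H2 := mn_le1 (h * - - s + s) (h * - s + s).
  have E : (h * s + s) ^+ 2 + 2 * (h * - s + s) ^+ 2 + ((h * - - s + s) ^+ 2 + 2 * (h * - s + s) ^+ 2)
    = 6 * s ^+ 2 - 4 * h * s ^+ 2 + 6 * (h * s) ^+ 2 by ring.
  lra.
rewrite (ltr0_norm h0).
have H1 := mn_le1 (h * - s + s) (h * s + s).
have H2 := mn_le2 (h * - - s + s) (h * - s + s).
have E : (h * - s + s) ^+ 2 + 2 * (h * s + s) ^+ 2 + ((h * - s + s) ^+ 2 + 2 * (h * - - s + s) ^+ 2)
    = 6 * s ^+ 2 + 4 * h * s ^+ 2 + 6 * (h * s) ^+ 2 by ring.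
lra.
Qed.


Definition B z x t h := L t (h *: z + x) + L t (h *: (- z) + x) - 2 * L t x.

Lemma B_le z x t h : B z x t h <= 4 * h ^+ 2 * ((rho ^+ 2) ^+ t * n2 z).
Proof.
rewrite /B /L; case: ifP => [/eqP ->|_].
  rewrite expr0 mul1r /n2 !c0_lin !c1_lin c0N c1N; exact: q_br.
rewrite -Yn2 !Yc0_lin !Yc1_lin Yc0N Yc1N; exact: mn_br.
Qed.

Lemma B_kink z x t h s : (t != 0)%N -> Yc0 t x = s -> Yc1 t x = s ->
  Yc0 t z = - s -> Yc1 t z = s ->
  B z x t h <= 4 * h ^+ 2 * ((rho ^+ 2) ^+ t * n2 z) - 4 * `|h| * s ^+ 2.
Proof.
move=> /negbTE t0 e0 e1 f0 f1.
rewrite /B /L t0 -Yn2 !Yc0_lin !Yc1_lin Yc0N Yc1N e0 e1 f0 f1.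
have := mn_kink s h; rewrite sqrrN; by [].
Qed.

Lemma B_le' z x t h : B z x t h <= 4 * h ^+ 2 * n2 z * (rho ^+ 2) ^+ t.
Proof. by rewrite -mulrA [n2 z * _]mulrC B_le. Qed.

Lemma SB_le z x t0 s h N : (t0 != 0)%N -> Yc0 t0 x = s -> Yc1 t0 x = s ->
  Yc0 t0 z = - s -> Yc1 t0 z = s ->
  S (h *: z + x) N + S (h *: (- z) + x) N - 2 * S x N <=
  4 * h ^+ 2 * n2 z * (2 - 2 * (rho ^+ 2) ^+ N) - (if (t0 < N)%N then 4 * `|h| * s ^+ 2 else 0).
Proof.
move=> t00 e0 e1 f0 f1.
have n2z : 0 <= n2 z by apply: addr_ge0; apply: sqr_ge0.
have P0 : 0 <= 4 * h ^+ 2 * n2 z.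
  by apply: mulr_ge0 => //; apply: mulr_ge0 => //; apply: sqr_ge0.
have [r0 r2] := andP rho2.
have hs : 0 <= 4 * `|h| * s ^+ 2.
  by apply: mulr_ge0; [apply: mulr_ge0 | apply: sqr_ge0].
set P := 4 * h ^+ 2 * n2 z in P0 *.
set K := 4 * `|h| * s ^+ 2 in hs *.
elim: N => [|N IH].
  rewrite /S !big_geq // expr0 /=; lra.
have E : S (h *: z + x) N.+1 + S (h *: (- z) + x) N.+1 - 2 * S x N.+1 =
   S (h *: z + x) N + S (h *: (- z) + x) N - 2 * S x N + B z x N h.
  rewrite /S !big_nat_recr //= /B; ring.
rewrite E.
have q0 : 0 <= (rho ^+ 2) ^+ N by rewrite exprn_ge0.
have eqN : (rho ^+ 2) ^+ N.+1 = rho ^+ 2 * (rho ^+ 2) ^+ N by rewrite exprS.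
rewrite eqN.
have Pq : 0 <= (P * (rho ^+ 2) ^+ N) * (1 - 2 * rho ^+ 2).
  by apply: mulr_ge0; [apply: mulr_ge0 | lra].
have -> : (t0 < N.+1)%N = (t0 < N)%N || (t0 == N) by rewrite ltnS leq_eqVlt orbC.
move: IH.
have Bl := B_le' z x N h; rewrite -/P in Bl.
case: (ltngtP t0 N) => [lt|gt|eq] /=.
- move: (S _ N) (S _ N) (S _ N) (B _ _ _ _) Bl => a b c d Bl.
  move: (rho ^+ 2) ((rho ^+ 2) ^+ N) r0 r2 q0 Pq Bl => r q r0 r2 q0 Pq Bl IH.
  have key : P * (2 - 2 * q) + P * q <= P * (2 - 2 * (r * q)).
    by rewrite -subr_ge0 (_ : _ - _ = P * q * (1 - 2 * r)) //; ring.
  lra.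
- move: (S _ N) (S _ N) (S _ N) (B _ _ _ _) Bl => a b c d Bl.
  move: (rho ^+ 2) ((rho ^+ 2) ^+ N) r0 r2 q0 Pq Bl => r q r0 r2 q0 Pq Bl IH.
  have key : P * (2 - 2 * q) + P * q <= P * (2 - 2 * (r * q)).
    by rewrite -subr_ge0 (_ : _ - _ = P * q * (1 - 2 * r)) //; ring.
  lra.
- subst t0; have := @B_kink z x N h s t00 e0 e1 f0 f1.
  move: (S _ N) (S _ N) (S _ N) (B _ _ _ _) => a b c d.
  move: (rho ^+ 2) ((rho ^+ 2) ^+ N) r0 r2 q0 Pq => r q r0 r2 q0 Pq Bk IH.
  have Bk' : d <= P * q - K.
    by move: Bk; rewrite /P /K (_ : 4 * h ^+ 2 * (q * n2 z) = 4 * h ^+ 2 * n2 z * q) //; ring.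
  have key : P * (2 - 2 * q) + P * q <= P * (2 - 2 * (r * q)).
    by rewrite -subr_ge0 (_ : _ - _ = P * q * (1 - 2 * r)) //; ring.
  lra.
Qed.


Lemma JB_le z x t0 s h : (t0 != 0)%N -> Yc0 t0 x = s -> Yc1 t0 x = s ->
  Yc0 t0 z = - s -> Yc1 t0 z = s ->
  Jstar Aop cst (h *: z + x) + Jstar Aop cst (h *: (- z) + x) - 2 * Jstar Aop cst x
  <= 8 * h ^+ 2 * n2 z - 4 * `|h| * s ^+ 2.
Proof.
move=> t00 e0 e1 f0 f1.
have cv : (fun N => S (h *: z + x) N + S (h *: (- z) + x) N - 2 * S x N) @ \oo -->
   Jstar Aop cst (h *: z + x) + Jstar Aop cst (h *: (- z) + x) - 2 * Jstar Aop cst x.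
  apply: cvgB; first exact: cvgD (Jstar_lim _) (Jstar_lim _).
  exact: cvgMl_tmp (Jstar_lim _).
apply: (cvgr_to_le cv).
near=> N.
have tN : (t0 < N)%N by near: N; exact: nbhs_infty_gt.
apply: le_trans (@SB_le z x t0 s h N t00 e0 e1 f0 f1) _; rewrite tN.
have n2z : 0 <= n2 z by apply: addr_ge0; apply: sqr_ge0.
have P0 : 0 <= 4 * h ^+ 2 * n2 z.
  by apply: mulr_ge0 => //; apply: mulr_ge0 => //; apply: sqr_ge0.
have q0 : 0 <= (rho ^+ 2) ^+ N by rewrite exprn_ge0 // sqr_ge0.
have : 0 <= 4 * h ^+ 2 * n2 z * (rho ^+ 2) ^+ N by apply: mulr_ge0.
have -> : 8 * h ^+ 2 * n2 z = 2 * (4 * h ^+ 2 * n2 z) by ring.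
move: (4 * h ^+ 2 * n2 z) ((rho ^+ 2) ^+ N) (4 * `|h| * s ^+ 2) => P q K H.
have -> : P * (2 - 2 * q) = 2 * P - 2 * (P * q) by ring.
lra.
Unshelve. all: by end_near.
Qed.


Lemma kink_nondiff (f : 'cV[R]_2 -> R) (x z : 'cV[R]_2) (K k : R) : 0 < k ->
  (forall h, f (h *: z + x) + f (h *: (- z) + x) - 2 * f x <= K * h ^+ 2 - k * `|h|) ->
  ~ differentiable f x.
Proof.
move=> k0 Hb Hd.
pose g1 := fun h : R => h^-1 *: ((f \o shift x) (h *: z) - f x).
pose g2 := fun h : R => h^-1 *: ((f \o shift x) (h *: (- z)) - f x).
have c1 : g1 @ (0 : R)^' --> 'D_z f x := @diff_derivable _ _ _ f x z Hd.
have c2 : g2 @ (0 : R)^' --> 'D_(- z) f x := @diff_derivable _ _ _ f x (- z) Hd.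
have c : (g1 + g2) @ (0 : R)^' --> 'D_z f x + 'D_(- z) f x by exact: cvgD.
rewrite (deriveE z Hd) (deriveE (- z) Hd) linearN addrN in c.
have k2 : 0 < k / 2 by rewrite divr_gt0.
have d0 : 0 < k / (2 * (`|K| + 1)).
  by rewrite divr_gt0 // mulr_gt0 // ltr_pwDr // normr_ge0.
near (0 : R)^' => h.
have H1 : `|(g1 + g2) h| < k / 2 by near: h; apply: cvgr0_norm_lt.
have H2 : `|h| < k / (2 * (`|K| + 1)) by near: h; exact: (dnbhs0_lt d0).
have H3 : h != 0 by near: h; exact: nbhs_dnbhs_neq.
have E : (g1 + g2) h = h^-1 * (f (h *: z + x) + f (h *: (- z) + x) - 2 * f x).
  rewrite /g1 /g2 /=.
  change (h^-1 *: (f (h *: z + x) - f x) + h^-1 *: (f (h *: - z + x) - f x) =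
    h^-1 * (f (h *: z + x) + f (h *: (- z) + x) - 2 * f x)).
  have sc : forall v : R, h^-1 *: v = h^-1 * v by [].
  rewrite !sc; move: (f _) (f _) (f x) => a b d; ring.
rewrite E normrM normfV in H1.
have Hb' := Hb h.
move: (f _ + _ - _) Hb' H1 => br Hb' H1.
have a0 : 0 < `|h| by rewrite normr_gt0.
have hK : K * h ^+ 2 <= `|K| * `|h| ^+ 2.
  by rewrite -normrX [`|h ^+ 2|]ger0_norm ?sqr_ge0 // ler_wpM2r ?sqr_ge0 // real_ler_norm ?num_real.
rewrite ltr_pdivlMr ?mulr_gt0 ?ltr_pwDr ?normr_ge0 // in H2.
rewrite -ltr_pdivlMl ?invr_gt0 // invrK in H1.
have nb := ler_norm (- br); rewrite normrN in nb.
have m0 : 0 <= `|K| := normr_ge0 K.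
move: (`|h|) (`|K|) (`|br|) a0 hK H2 H1 nb m0 Hb' => a m nbr a0 hK H2 H1 nb m0 Hb'.
have key : m * a ^+ 2 <= (k / 2) * a.
  have : m * a <= k / 2 by nra.
  move=> H; rewrite expr2 mulrA; apply: ler_wpM2r => //; exact: ltW.
nra.
Unshelve. all: by end_near.
Qed.


Definition rotq (x : 'cV[R]_2) : 'cV[R]_2 :=
  \col_i (if (nat_of_ord i == 0)%N then - c1 x else c0 x).

Lemma nondiff_at x t0 s : (t0 != 0)%N -> Yc0 t0 x = s -> Yc1 t0 x = s -> s != 0 ->
  ~ differentiable (Jstar Aop cst) x.
Proof.
move=> t00 e0 e1 s0.
have z0 : c0 (rotq x) = - c1 x by rewrite /c0 /rotq mxE.
have z1 : c1 (rotq x) = c0 x by rewrite /c1 /rotq mxE.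
have f0 : Yc0 t0 (rotq x) = - s.
  rewrite -e1 /Yc0 /Yc1 z0 z1; move: (rho ^+ t0) (cos _) (sin _) (c0 x) (c1 x) => *; ring.
have f1 : Yc1 t0 (rotq x) = s.
  rewrite -e0 /Yc0 /Yc1 z0 z1; move: (rho ^+ t0) (cos _) (sin _) (c0 x) (c1 x) => *; ring.
apply: (@kink_nondiff _ x (rotq x) (8 * n2 (rotq x)) (4 * s ^+ 2)).
  by rewrite mulr_gt0 // exprn_even_gt0.
move=> h; have := @JB_le (rotq x) x t0 s h t00 e0 e1 f0 f1.
by rewrite (_ : 8 * n2 (rotq x) * h ^+ 2 = 8 * h ^+ 2 * n2 (rotq x)) 1?(_ : 4 * s ^+ 2 * `|h| = 4 * `|h| * s ^+ 2) //; ring.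
Qed.


Lemma cs_nat (u : R) (n : nat) : exists e : R, e ^+ 2 = 1 /\
  cos (u + n%:R * pi) = e * cos u /\ sin (u + n%:R * pi) = e * sin u.
Proof.
elim: n => [|n [e [he [hc hs]]]].
  by exists 1; rewrite mul0r addr0 !mul1r expr1n.
exists (- e); rewrite sqrrN he; split => //.
have -> : u + n.+1%:R * pi = (u + n%:R * pi) + pi by rewrite mulrSr; ring.
by rewrite cosDpi sinDpi hc hs !mulNr.
Qed.

Lemma cs_int (u : R) (m : int) : exists e : R, e ^+ 2 = 1 /\
  cos (u + m%:~R * pi) = e * cos u /\ sin (u + m%:~R * pi) = e * sin u.
Proof.
case: m => n.
  by have := cs_nat u n; rewrite pmulrn.
rewrite NegzE mulrNz.
set v := u + _.
have [e [he [hc hs]]] := cs_nat v n.+1.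
have E : v + n.+1%:R * pi = u by rewrite /v; ring.
rewrite E in hc hs; exists e; split => //.
by rewrite hc hs !mulrA -expr2 he !mul1r.
Qed.

Lemma sin_pi4 : sin (pi / 4) = cos (pi / 4) :> R.
Proof.
have E : pi / 4 - pi / 2 = - (pi / 4) :> R.
  have -> : pi / 2 = pi / 4 + pi / 4 :> R.
    by rewrite -mulrDr; congr (_ * _); field.
  ring.
by rewrite -cosBpihalf E cosN.
Qed.

Lemma cos_pi4_gt0 : 0 < cos (pi / 4) :> R.
Proof.
apply: cos_gt0_pihalf; have := @pi_gt0 R => p0.
by rewrite (_ : - (pi / 2) < pi / 4); [|lra]; rewrite /=; lra.
Qed.


Definition col2 (u v : R) : 'cV[R]_2 := \col_i (if (nat_of_ord i == 0)%N then u else v).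
Lemma col2_0 u v : c0 (col2 u v) = u. Proof. by rewrite /c0 /col2 mxE. Qed.
Lemma col2_1 u v : c1 (col2 u v) = v. Proof. by rewrite /c1 /col2 mxE. Qed.

Lemma ball2 (x y : 'cV[R]_2) e : 0 < e -> `|c0 x - c0 y| < e -> `|c1 x - c1 y| < e -> ball x e y.
Proof.
move=> e0 h0 h1; split => // i j.
rewrite (ord1 j).
case: i => [[|[|//]]] Hi.
  have -> : Ordinal Hi = 0 by apply: val_inj.
  by rewrite -ball_normE /ball_ /=.
have -> : Ordinal Hi = 1 by apply: val_inj.
by rewrite -ball_normE /ball_ /=.
Qed.

Lemma ball2_inv (x y : 'cV[R]_2) e : ball x e y -> `|c0 x - c0 y| < e /\ `|c1 x - c1 y| < e.
Proof.
move=> [_ H]; have := H 0 0; have := H 1 0; rewrite -!ball_normE /ball_ /=.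
by move=> *; split.
Qed.


Lemma polar (x : 'cV[R]_2) : 0 < n2 x ->
  exists r th, 0 < r /\ c0 x = r * cos th /\ c1 x = r * sin th.
Proof.
move=> n0; set r := Num.sqrt (n2 x).
have r0 : 0 < r by rewrite sqrtr_gt0.
have r2 : r ^+ 2 = n2 x by rewrite sqr_sqrtr // ltW.
set ca := c0 x / r; set sa := c1 x / r.
have hx0 : c0 x = r * ca by rewrite /ca mulrC divfK // gt_eqF.
have hx1 : c1 x = r * sa by rewrite /sa mulrC divfK // gt_eqF.
clearbody ca sa.
have cs1 : ca ^+ 2 + sa ^+ 2 = 1.
  have : r ^+ 2 * (ca ^+ 2 + sa ^+ 2) = r ^+ 2 * 1.
    have e : r ^+ 2 * (ca ^+ 2 + sa ^+ 2) = n2 x by rewrite /n2 hx0 hx1; ring.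
    by rewrite e mulr1 r2.
  by move/mulfI; apply; rewrite expf_neq0 // gt_eqF.
have ca1 : -1 <= ca <= 1.
  have h : ca ^+ 2 <= 1 by have := sqr_ge0 sa; lra.
  by apply/andP; split; nra.
have sac : Num.sqrt (1 - ca ^+ 2) = `|sa| by rewrite -sqrtr_sqr; congr Num.sqrt; lra.
exists r, (if 0 <= sa then acos ca else - acos ca); split => //.
case: ifP => hs.
  rewrite acosK ?in_itv //= sin_acos // sac ger0_norm //.
rewrite cosN sinN acosK ?in_itv //= sin_acos // sac ltr0_norm ?opprK //.
by rewrite ltNge hs.
Qed.


Lemma main_dense : ~ (exists q : rat, alpha / pi = ratr q) ->
  dense [set x : 'cV[R]_2 | ~ differentiable (Jstar Aop cst) x].
Proof.
move=> irr O [x1 Ox1] oO.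
have pi0 : 0 < pi :> R := pi_gt0 R.
have irr' : forall (n : nat) (m : int), (0 < n)%N -> (alpha / pi) * n%:R != m%:~R.
  move=> n m n0; apply/eqP => e; apply: irr; exists (m%:~R / n%:R).
  rewrite fmorph_div rmorph_int rmorph_nat -e mulfK //.
  by rewrite pnatr_eq0 -lt0n.
have [x2 [e2 [n2x [e20 Hball]]]] : exists x2 e2, 0 < n2 x2 /\ 0 < e2 /\
    forall y, `|c0 x2 - c0 y| < e2 -> `|c1 x2 - c1 y| < e2 -> O y.
  have : nbhs x1 O by apply: oO.
  move=> /nbhs_ballP [e e0 He].
  have HB y : `|c0 x1 - c0 y| < e -> `|c1 x1 - c1 y| < e -> O y.
    by move=> h0 h1; apply: He; apply: ball2.
  case: (ltrP 0 (n2 x1)) => hn.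
    by exists x1, e; split => //; split.
  exists (col2 (c0 x1 + e / 2) (c1 x1)), (e / 2); split.
    rewrite /n2 col2_0 col2_1.
    have c00 : c0 x1 ^+ 2 = 0.
      apply/eqP; rewrite eq_le sqr_ge0 andbT; move: hn; rewrite /n2.
      have := sqr_ge0 (c1 x1); lra.
    move/eqP: c00; rewrite sqrf_eq0 => /eqP ->.
    have := sqr_ge0 (c1 x1); have : 0 < (0 + e / 2) ^+ 2 by rewrite add0r exprn_gt0 // divr_gt0.
    lra.
  split; first by rewrite divr_gt0.
  move=> y; rewrite col2_0 col2_1 => h0 h1; apply: HB.
    move: h0; rewrite !ltr_norml => /andP[k0 k0']; apply/andP; split; lra.
  move: h1; rewrite !ltr_norml => /andP[k0 k0']; apply/andP; split; lra.
have [r [th0 [r0 [hx0 hx1]]]] := @polar x2 n2x.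
have eps0 : 0 < e2 / r by rewrite divr_gt0.
have [dl dl0 Hdl] : exists2 dl, 0 < dl & forall th, `|th0 - th| < dl ->
    `|cos th0 - cos th| < e2 / r /\ `|sin th0 - sin th| < e2 / r.
  have Hc : \forall th \near th0, `|cos th0 - cos th| < e2 / r.
    by move: (@continuous_cos R th0) => /cvgr_dist_lt/(_ _ eps0).
  have Hs : \forall th \near th0, `|sin th0 - sin th| < e2 / r.
    by move: (@continuous_sin R th0) => /cvgr_dist_lt/(_ _ eps0).
  have [dl dl0 Hd] := (nbhs_ballP _ _).1 (filterI Hc Hs).
  exists dl => // th hth; apply: Hd.
have [t [t0 [m hm]]] := @kron R _ irr' ((pi / 4 - th0) / pi) (dl / pi) (divr_gt0 dl0 pi0).
set th := pi / 4 - t%:R * alpha + m%:~R * pi.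
have hth : `|th0 - th| < dl.
  have e : th0 - th = (t%:R * (alpha / pi) - m%:~R - (pi / 4 - th0) / pi) * pi.
    rewrite /th; move: (@pi R) pi0 => P P0; field; by rewrite ?gt_eqF.
  by rewrite e normrM (gtr0_norm pi0) -ltr_pdivlMr.
have [Hc Hs] := Hdl th hth.
exists (col2 (r * cos th) (r * sin th)); split.
  apply: Hball; rewrite ?col2_0 ?col2_1 ?hx0 ?hx1 -mulrBr normrM gtr0_norm //.
    by rewrite mulrC -ltr_pdivlMr.
  by rewrite mulrC -ltr_pdivlMr.
have [ee [hee [hc hs]]] := cs_int (pi / 4) m.
have ht : t%:R * alpha + th = pi / 4 + m%:~R * pi by rewrite /th; ring.
clearbody th.
have rt0 : 0 < rho ^+ t by rewrite exprn_gt0 // /rho invr_gt0 ltr0n.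
apply: (@nondiff_at _ t (rho ^+ t * r * (ee * cos (pi / 4)))).
- by rewrite -lt0n.
- have -> : Yc0 t (col2 (r * cos th) (r * sin th)) = rho ^+ t * r * cos (t%:R * alpha + th).
    rewrite /Yc0 col2_0 col2_1 cosD.
    by move: (rho ^+ t) (cos _) (sin _) (cos th) (sin th) => *; ring.
  by rewrite ht hc.
- have -> : Yc1 t (col2 (r * cos th) (r * sin th)) = rho ^+ t * r * sin (t%:R * alpha + th).
    rewrite /Yc1 col2_0 col2_1 sinD.
    by move: (rho ^+ t) (cos _) (sin _) (cos th) (sin th) => *; ring.
  by rewrite ht hs sin_pi4.
  have ee0 : ee != 0 by apply/eqP => e0; move: hee; rewrite e0 expr0n /= => /eqP; rewrite eq_sym oner_eq0.
  apply: mulf_neq0; first by apply: mulf_neq0; rewrite gt_eqF.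
  by apply: mulf_neq0 => //; rewrite gt_eqF // cos_pi4_gt0.
Qed.

End Main.

Theorem corollary3 (R : realType) (alpha : R) :
  pi / 8 < alpha < 3 * pi / 8 ->
  ~ (exists q : rat, alpha / pi = ratr q) ->
  let beta := alpha - pi / 2 in
  let rho : R := 100%:R^-1 in
  let A : 'I_2 -> 'M[R]_2 :=
    fun i => if (nat_of_ord i == 0)%N then rho *: rotmx alpha else rho *: rotmx beta in
  let c : 'cV[R]_2 -> R := fun x => x 0 0 ^+ 2 + 2 * x 1 0 ^+ 2 in
  dense [set x : 'cV[R]_2 | ~ differentiable (Jstar A c) x].
Proof.
move=> _ irr beta rho' A c.
exact: (@main_dense R alpha irr).
Qed.
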